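(* Let $A$ be a locally convex topological vector space over $\mathbb C$ and $K\subset A$. Then $$\{V\in\mathrm{Max}\,A: F(V)\cap S(K,\mathbb C\setminus\{0\})\ne\emptyset\}\subset\check K,$$ with equality if $K$ is convex and compact.
   Context: $\mathrm{Max}\,A$ is the set of closed subspaces of $A$; $A^\vee$ the continuous dual; $F(V)=\{\phi\in A^\vee:\phi|_V=0\}$; $S(K,U)=\{\phi\in A^\vee:\phi(K)\subset U\}$; $\check K=\{V\in\mathrm{Max}\,A: V\cap K=\emptyset\}$. *)

(* Defs.v *)
(* The scalar field C is modelled as R[i] (complex
   numbers over an arbitrary realType R, from mathcomp-real-closed), with the
   norm topology given by the regular lmodule R[i]^o. *)
From HB Require Import structures.
From mathcomp Require Import all_boot all_order all_algebra.
From mathcomp Require Import all_classical all_reals all_analysis.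
From mathcomp Require Export complex.
Export Order.TTheory GRing.Theory Num.Theory.
Export numFieldNormedType.Exports.

Set Implicit Arguments.
Unset Strict Implicit.
Unset Printing Implicit Defensive.

Local Open Scope classical_set_scope.
Local Open Scope ring_scope.

Section Defs.
Variables (R : realType) (A : tvsType R[i]).

Definition is_subspace (V : set A) : Prop :=
  V 0 /\ forall (a : R[i]) (x y : A), V x -> V y -> V (a *: x + y).

Definition MaxA : set (set A) := [set V | closed V /\ is_subspace V].

Definition cdual : set (A -> R[i]^o) :=
  [set phi : A -> R[i]^o | (forall (a : R[i]) (x y : A), phi (a *: x + y) = a *: phi x + phi y)
             /\ continuous phi].

Definition Fann (V : set A) : set (A -> R[i]^o) :=
  [set phi : A -> R[i]^o | cdual phi /\ forall v, V v -> phi v = 0].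

Definition Sset (K : set A) (U : set R[i]^o) : set (A -> R[i]^o) :=
  [set phi : A -> R[i]^o | cdual phi /\ phi @` K `<=` U].

Definition checkK (K : set A) : set (set A) :=
  [set V | MaxA V /\ V `&` K = set0].

End Defs.

(* Main.v *)
Require Import Defs.
From HB Require Import structures.
From mathcomp Require Import all_boot all_order all_algebra.
From mathcomp Require Import all_classical all_reals all_analysis.
From mathcomp Require Import complex.
From mathcomp Require Import ring lra.
Import Order.TTheory GRing.Theory Num.Theory.
Import numFieldNormedType.Exports.
Local Open Scope classical_set_scope.
Local Open Scope ring_scope.
Set Implicit Arguments. Unset Strict Implicit. Unset Printing Implicit Defensive.
Section HB.
Context (R : realType) (E : lmodType R[i]) (W : set E).
Local Open Scope complex_scope.
Hypothesis Wconv : forall x y (l : R), 0 <= l -> l <= 1 -> W x -> W y ->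
  W (l%:C *: x + (1 - l)%:C *: y).
Hypothesis Wabs : forall y, exists t : R, 0 < t /\ W (t%:C *: y).

Definition gprops (G : set (E * R)) :=
 [/\ (forall x r s, G (x,r) -> G (x,s) -> r = s),
     (forall x r y s, G (x,r) -> G (y,s) -> G (x+y, r+s)),
     (forall (a:R) x r, G (x,r) -> G (a%:C *: x, a*r)) &
     (forall x r, G (x,r) -> W x -> r <= 1)].

Lemma key_ineq G m1 g1 m2 g2 y (t s : R) : gprops G ->
  G (m1, g1) -> G (m2, g2) -> 0 < t -> 0 < s ->
  W (m1 + t%:C *: y) -> W (m2 - s%:C *: y) ->
  (g2 - 1) / s <= (1 - g1) / t.
Proof.
move=> [Gf Ga Gs Gb] G1 G2 t0 s0 W1 W2.
have st0 : 0 < s + t by rewrite addr_gt0.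
pose l := s / (s + t).
have l0 : 0 <= l by rewrite divr_ge0 // ltW.
have l1 : l <= 1 by rewrite ler_pdivrMr // mul1r lerDl ltW.
have := Wconv l0 l1 W1 W2.
have -> : l%:C *: (m1 + t%:C *: y) + (1 - l)%:C *: (m2 - s%:C *: y)
   = l%:C *: m1 + (1 - l)%:C *: m2.
  rewrite !scalerDr !scalerN !scalerA -!rmorphM /=.
  have -> : (1 - l) * s = l * t.
    rewrite /l; field; by rewrite lt0r_neq0.
  by rewrite addrACA subrr addr0.
move=> /(Gb _ _ (Ga _ _ _ _ (Gs l _ _ G1) (Gs (1 - l) _ _ G2))) H.
have H2 : s * g1 + t * g2 <= s + t.
  have -> : s * g1 + t * g2 = (s + t) * (l * g1 + (1 - l) * g2).
    rewrite /l; field; by rewrite lt0r_neq0.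
  by rewrite -[X in _ <= X]mulr1 ler_wpM2l // ltW.
rewrite -subr_ge0.
have -> : (1 - g1) / t - (g2 - 1) / s = ((s + t) - (s * g1 + t * g2)) / (s * t).
  field; by rewrite !lt0r_neq0.
by rewrite divr_ge0 ?subr_ge0 // ltW // mulr_gt0.
Qed.
End HB.
Section HB2.
Context (R : realType) (E : lmodType R[i]) (W : set E).
Local Open Scope complex_scope.
Hypothesis Wconv : forall x y (l : R), 0 <= l -> l <= 1 -> W x -> W y ->
  W (l%:C *: x + (1 - l)%:C *: y).
Hypothesis Wabs : forall y, exists t : R, 0 < t /\ W (t%:C *: y).

Lemma gext G y : gprops W G -> G (0,0) -> ~ (exists r, G (y,r)) ->
  exists G', gprops W G' /\ G `<=` G' /\ ~ G' `<=` G.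
Proof.
move=> GP G00 ny; have [Gf Ga Gs Gb] := GP.
pose L := [set l | exists m g s, [/\ G (m,g), 0 < s, W (m - s%:C *: y) & l = (g-1)/s]].
have Lne : L !=set0.
  have [s [s0 Ws]] := Wabs (- y).
  exists ((0 - 1)/s), 0, 0, s; split => //.
  by rewrite sub0r -scalerN.
have [t0 [t00 Wt0]] := Wabs y.
have Lub : ubound L ((1 - 0) / t0).
  move=> _ [m [g [s [Gmg s0 Wm ->]]]].
  by apply: (key_ineq Wconv GP G00 Gmg t00 s0 _ Wm); rewrite add0r.
pose c := sup L.
have cL : forall l, L l -> l <= c.
  by move=> l Ll; apply: sup_upper_bound => //; split => //; exists ((1 - 0) / t0).
have cU : forall m g t, G (m,g) -> 0 < t -> W (m + t%:C *: y) -> c <= (1 - g) / t.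
  move=> m g t Gmg t0' Wm; apply: ge_sup => //.
  move=> _ [m' [g' [s [Gmg' s0 Wm' ->]]]].
  exact: (key_ineq Wconv GP Gmg Gmg' t0' s0 Wm Wm').
pose G' := [set p | exists m g (t:R), G (m,g) /\ p = (m + t%:C *: y, g + t*c)].
exists G'; split; last split.
- split.
  + move=> x r s [m1 [g1 [t1 [G1 [-> ->]]]]] [m2 [g2 [t2 [G2 [e ->]]]]].
    have [t12|t12] := eqVneq t1 t2.
      subst t2; move/addIr: e => e; subst m2.
      by rewrite (Gf _ _ _ G1 G2).
    exfalso; apply: ny.
    have Gm : G (m2 - m1, g2 - g1).
      apply: Ga => //; have := Gs (-1) _ _ G1.
      by rewrite rmorphN1 scaleN1r mulN1r.
    exists ((t1 - t2)^-1 * (g2 - g1)).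
    have -> : y = ((t1 - t2)^-1)%:C *: (m2 - m1).
      have e2 : (t1 - t2)%:C *: y = m2 - m1.
        rewrite rmorphB scalerBl -[m2](addrK (t2%:C *: y)) -e.
        by rewrite addrAC (addrC m1) addrK.
      rewrite -e2 scalerA -rmorphM mulVf ?subr_eq0 // scale1r //.
    exact: Gs.
  + move=> x r z s [m1 [g1 [t1 [G1 [-> ->]]]]] [m2 [g2 [t2 [G2 [-> ->]]]]].
    exists (m1 + m2), (g1 + g2), (t1 + t2); split; first exact: Ga.
    by rewrite rmorphD scalerDl mulrDl addrACA [in X in (_, X)]addrACA.
  + move=> a x r [m1 [g1 [t1 [G1 [-> ->]]]]].
    exists (a%:C *: m1), (a * g1), (a * t1); split; first exact: Gs.
    by rewrite scalerDr scalerA -rmorphM mulrDr mulrA.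
  + move=> x r [m [g [t [Gmg [-> ->]]]]] Wm.
    have [t0'|t0'|t0E] := ltgtP 0 t.
    * have := cU _ _ _ Gmg t0' Wm; rewrite ler_pdivlMr // => h.
      by rewrite -lerBrDl mulrC.
    * have s0 : 0 < - t by rewrite oppr_gt0.
      have Ll : L ((g - 1) / (- t)).
        exists m, g, (- t); split => //.
        by rewrite rmorphN scaleNr opprK.
      have := cL _ Ll; rewrite ler_pdivrMr // => h.
      by rewrite -lerBrDl; move: h; rewrite mulrN mulrC; lra.
    * subst t; move: Wm; rewrite rmorph0 scale0r addr0 mul0r addr0 => Wm.
      exact: Gb Gmg Wm.
- move=> [m g] Gmg; exists m, g, 0; split => //.
  by rewrite rmorph0 scale0r addr0 mul0r addr0.
- move=> sub; apply: ny; exists c; apply: sub.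
  exists 0, 0, 1; split => //.
  by rewrite rmorph1 scale1r add0r mul1r add0r.
Qed.
End HB2.
Section HB3.
Context (R : realType) (E : lmodType R[i]) (W : set E).
Local Open Scope complex_scope.
Hypothesis Wconv : forall x y (l : R), 0 <= l -> l <= 1 -> W x -> W y ->
  W (l%:C *: x + (1 - l)%:C *: y).
Hypothesis Wabs : forall y, exists t : R, 0 < t /\ W (t%:C *: y).

Lemma gprops_bigcup (F : set (set (E * R))) :
  (forall G, F G -> gprops W G) -> total_on F subset ->
  gprops W (\bigcup_(X in F) X).
Proof.
move=> FP tot.
have two : forall p q, (\bigcup_(X in F) X) p -> (\bigcup_(X in F) X) q ->
    exists X, [/\ F X, X p & X q].
  move=> p q [X FX Xp] [Y FY Yq].
  have [XY|YX] := tot _ _ FX FY.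
    by exists Y; split => //; apply: XY.
  by exists X; split => //; apply: YX.
split.
- move=> x r s H1 H2; have [X [FX X1 X2]] := two _ _ H1 H2.
  by have [Gf _ _ _] := FP _ FX; apply: Gf X1 X2.
- move=> x r y s H1 H2; have [X [FX X1 X2]] := two _ _ H1 H2.
  have [_ Ga _ _] := FP _ FX; exists X => //; exact: Ga.
- move=> a x r [X FX X1]; have [_ _ Gs _] := FP _ FX; exists X => //; exact: Gs.
- move=> x r [X FX X1]; have [_ _ _ Gb] := FP _ FX; exact: Gb.
Qed.

Lemma hb_main (y0 : E) (c0 : R) : y0 != 0 ->
  (forall t : R, W (t%:C *: y0) -> t * c0 <= 1) ->
  exists f : E -> R, (forall (a : R) x z, f (a%:C *: x + z) = a * f x + f z)
    /\ f y0 = c0 /\ forall x, W x -> f x <= 1.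
Proof.
move=> y00 Hc.
pose G0 := [set p | exists t : R, p = (t%:C *: y0, t * c0)].
have G0P : gprops W G0.
  split.
  - move=> x r s [t1 [-> ->]] [t2 [e ->]].
    suff -> : t1 = t2 by [].
    apply/eqP; rewrite -subr_eq0; apply/eqP.
    have : (t1 - t2)%:C *: y0 = 0 by rewrite rmorphB scalerBl e subrr.
    move/eqP; rewrite scaler_eq0 (negbTE y00) orbF => /eqP.
    by move=> h; apply: complexI; rewrite h.
  - move=> x r y s [t1 [-> ->]] [t2 [-> ->]]; exists (t1 + t2).
    by rewrite rmorphD scalerDl mulrDl.
  - move=> a x r [t1 [-> ->]]; exists (a * t1).
    by rewrite scalerA -rmorphM mulrA.
  - by move=> x r [t [-> ->]] Wx; apply: Hc.
pose P := [set G | gprops W G /\ (G = set0 \/ G0 `<=` G)].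
have [M [[MP MG0] Mmax]] : exists A, P A /\ forall B, A `<` B -> ~ P B.
  apply: Zorn_bigcup => F FP tot; split.
    by apply: gprops_bigcup => // G /FP [].
  case: (pselect (exists X, F X /\ G0 `<=` X)) => [[X [FX XG0]]|nX].
    by right => p G0p; exists X => //; exact: XG0.
  left; apply/seteqP; split => // p [X FX Xp].
  have [_ [X0|XG0]] := FP _ FX.
    by move: Xp; rewrite X0.
  by exfalso; apply: nX; exists X.
have {MG0}MG0 : G0 `<=` M.
  case: MG0 => // M0; exfalso; apply: (Mmax G0); last by split => //; right.
  rewrite M0; split => //; move=> sub.
  have : G0 (0%:C *: y0, 0 * c0) by exists 0.
  by move/sub.
have M00 : M (0, 0).
  have : G0 (0%:C *: y0, 0 * c0) by exists 0.
  by move/MG0; rewrite rmorph0 scale0r mul0r.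
have tot : forall x, exists r, M (x, r).
  move=> x; apply: contrapT => nx.
  have [G' [G'P [MG' nG'M]]] := gext Wconv Wabs MP M00 nx.
  apply: (Mmax G'); first by split.
  split => //; right; exact: subset_trans MG'.
have [f Hf] := choice tot.
have [Mf Ma Ms Mb] := MP.
exists f; split; last split.
- move=> a x z; apply: (Mf _ _ _ (Hf _)).
  by apply: Ma => //; apply: Ms.
- apply: (Mf _ _ _ (Hf _)).
  have : G0 (1%:C *: y0, 1 * c0) by exists 1.
  by move/MG0; rewrite rmorph1 scale1r mul1r.
- move=> x Wx; exact: Mb (Hf x) Wx.
Qed.
End HB3.
Section Top.
Context (R : realType) (A : tvsType R[i]).
Local Open Scope complex_scope.

Lemma tube (K V : set A) : compact K -> closed V -> V `&` K = set0 ->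
  exists N : set A, nbhs 0 N /\ forall k u, K k -> N u -> ~ V (k + u).
Proof.
move=> cK cV VK.
have := (proj1 (compact_near_coveringP K) cK) A (nbhs (0 : A))
  (fun u x => ~ V (x + u)) _.
have H : forall x, K x -> \forall x' \near x & i \near (nbhs (0:A)), ~ V (x' + i).
  move=> x Kx.
  have := @add_continuous A (x, 0).
  move=> /(_ (~` V)); rewrite addr0 => /=; apply.
  apply: open_nbhs_nbhs; split; first exact: closed_openC.
  by move=> Vx; have : (V `&` K) x by []; rewrite VK.
move=> /(_ _ H) HN; eexists; split; first exact: HN.
by move=> k u Kk Nu; apply: Nu.
Qed.
End Top.
Section Top2.
Context (R : realType) (A : tvsType R[i]).
Local Open Scope complex_scope.

Lemma convex_real (S : set A) : convex_set S ->
  forall x y (l : R), 0 <= l -> l <= 1 -> S x -> S y ->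
  S (l%:C *: x + (1 - l)%:C *: y).
Proof.
move=> cS x y l l0 l1 Sx Sy.
have l0' : 0 <= l%:C by rewrite lecR.
have l1' : l%:C <= 1 by rewrite lecR.
have := cS x y (Itv01 l0' l1') (mem_set Sx) (mem_set Sy).
rewrite inE /= /conv /=.
by rewrite rmorphB rmorph1.
Qed.

Lemma conv_open_sub (N : set A) : nbhs 0 N ->
  exists U : set A, [/\ open U, U 0, U `<=` N & convex_set U].
Proof.
move=> N0.
have [B Bc [Bo Bb]] := @locally_convex _ A.
have := Bb 0 N N0.
move=> [U [BU U0] UN]; exists U; split => //.
- exact: Bo.
- by apply: Bc; rewrite inE.
Qed.
End Top2.
Section Top3.
Context (R : realType) (A : tvsType R[i]).
Local Open Scope complex_scope.

Lemma nbhs_pre (U : set A) (c : R[i]) : c != 0 -> nbhs 0 U ->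
  nbhs 0 [set h | U (c *: h)].
Proof.
move=> c0 U0; have := nbhs0Z (invr_neq0 c0) U0.
apply: filterS => _ [u Uu <-] /=.
by rewrite scalerA divff // scale1r.
Qed.

Lemma absorb (U : set A) : nbhs 0 U -> forall y, exists t : R, 0 < t /\ U (t%:C *: y).
Proof.
move=> U0 y.
have := @scale_continuous R[i] A (0, y) U.
rewrite /= scale0r => /(_ U0) [] /= B [B1 B2] BU.
move: B1 => /nbhs_ballP [e /= e0 eB].
move: e0; rewrite ltcE /= => /andP [/eqP Ie Re0].
exists (complex.Re e / 2); split; first by rewrite divr_gt0.
apply: (BU ((complex.Re e / 2)%:C, y)); split => //=; last exact: nbhs_singleton.
apply: eB; rewrite /ball /= sub0r normrN normc_def /= ltcE /= Ie eqxx /=.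
rewrite expr0n /= addr0 sqrtr_sqr ger0_norm ?divr_ge0 ?ltW //.
by rewrite ltr_pdivrMr // ltr_pMr // ltr1n.
Qed.
End Top3.
Section Top4.
Context (R : realType) (A : tvsType R[i]).
Local Open Scope complex_scope.

Lemma lin_cont (phi : A -> R[i]^o) (Z : set A) :
  (forall a x y, phi (a *: x + y) = a * phi x + phi y) -> nbhs 0 Z ->
  (forall h, Z h -> `|phi h| <= 2) -> continuous phi.
Proof.
move=> lin Z0 bnd x; apply/cvgrPdist_lt => e e0.
have c0 : 0 < e / 4 by rewrite divr_gt0.
have := nbhsT x (nbhs0Z (lt0r_neq0 c0) Z0).
apply: filterS => _ [_ [z Zz <-] <-] /=.
rewrite [x + _]addrC lin opprD addrCA subrr addr0 normrN normrM (ger0_norm (ltW c0)).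
apply: (le_lt_trans (y := e / 4 * 2)).
  by apply: ler_wpM2l; [exact: ltW | exact: bnd].
rewrite (_ : e / 4 * 2 = e / 2); last by field.
by rewrite ltr_pdivrMr // ltr_pMr // ltr1n.
Qed.
End Top4.
Section Cx.
Context (R : realType) (E : lmodType R[i]).
Local Open Scope complex_scope.
Variable f : E -> R.
Hypothesis flin : forall (a:R) x z, f (a%:C *: x + z) = a * f x + f z.

Lemma f0 : f 0 = 0.
Proof.
have := flin 1 0 0; rewrite scaler0 addr0 mul1r => h; lra.
Qed.
Lemma fD x z : f (x + z) = f x + f z.
Proof. by rewrite -[x in LHS]scale1r -(rmorph1 (real_complex R)) flin mul1r. Qed.
Lemma fZ (a : R) x : f (a%:C *: x) = a * f x.
Proof. by rewrite -[_ *: x]addr0 flin f0 addr0. Qed.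
Lemma fN x : f (- x) = - f x.
Proof. by rewrite -scaleN1r -(rmorphN1 (real_complex R)) fZ mulN1r. Qed.

Definition cphi x : R[i] := Complex (f x) (- f ('i *: x)).

Lemma fC al be x : f (Complex al be *: x) = al * f x + be * f ('i *: x).
Proof.
have -> : Complex al be = al%:C + be%:C * 'i.
  by apply/eqP; rewrite eq_complex /=; apply/andP; split; apply/eqP; ring.
by rewrite scalerDl -scalerA fD !fZ.
Qed.

Lemma fii x : f ('i *: ('i *: x)) = - f x.
Proof.
rewrite scalerA (_ : 'i * 'i = -1 :> R[i]); last first.
  by apply/eqP; rewrite eq_complex /=; apply/andP; split; apply/eqP; ring.
by rewrite scaleN1r fN.
Qed.

Lemma cphi_lin a x y : cphi (a *: x + y) = a * cphi x + cphi y.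
Proof.
case: a => al be.
rewrite /cphi scalerDr fD fD (scalerA 'i) (mulrC 'i) -scalerA (fC al be x) (fC al be ('i *: x)) fii.
apply/eqP; rewrite eq_complex /=; apply/andP; split; apply/eqP; ring.
Qed.
End Cx.
Lemma zmod_aux (M : zmodType) (k k0 u v : M) : k - k0 + u + v + k0 = k + u + v.
Proof. by rewrite -!addrA; congr (_ + _); rewrite addrC !addrA addrK. Qed.

Lemma conv_aux (R : realType) (M : lmodType R[i]) (l m : R[i]) (k1 k2 k0 u1 u2 v1 v2 : M) :
  l + m = 1 ->
  l *: (k1 - k0 + u1 + v1) + m *: (k2 - k0 + u2 + v2) =
  (l *: k1 + m *: k2) - k0 + (l *: u1 + m *: u2) + (l *: v1 + m *: v2).
Proof.
move=> lm.
rewrite -[k0 in RHS]scale1r -lm scalerDl opprD !scalerDr !scalerN.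
rewrite addrACA; congr (_ + _).
rewrite addrACA; congr (_ + _).
by rewrite addrACA.
Qed.

Local Open Scope complex_scope.
Unset Implicit Arguments.
Theorem corollary7p4 (R : realType) (A : tvsType R[i]) (K : set A) :
  [set V | MaxA V /\ (Fann V `&` Sset K [set z : R[i]^o | z != 0]) !=set0]
    `<=` checkK K /\
  (convex_set K -> compact K ->
   [set V | MaxA V /\ (Fann V `&` Sset K [set z : R[i]^o | z != 0]) !=set0]
     = checkK K).
Proof.
have dir1 : [set V | MaxA V /\ (Fann V `&` Sset K [set z : R[i]^o | z != 0]) !=set0]
    `<=` checkK K.
  move=> V [MV [phi [[cphi phiV] [_ phiK]]]]; split => //.
  apply/seteqP; split => // x [Vx Kx].
  have := phiK (phi x) (imageP phi Kx); rewrite /= phiV //.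
  by rewrite eqxx.
split => // cK compK; apply/seteqP; split => //.
move=> V [[clV [V0 Vsub]] VK]; split; first by split.
case: (pselect (exists k, K k)) => [[k0 Kk0]|nK]; last first.
  have cd0 : cdual (fun=> 0 : R[i]^o).
    split => [a x y|]; first by rewrite /= scaler0 addr0.
    exact: cst_continuous.
  exists (fun=> 0 : R[i]^o); split.
    by split.
  split; first exact: cd0.
  by move=> z [k Kk e]; exfalso; apply: nK; exists k.
have [N [N0 HN]] := tube compK clV VK.
have [U [oU U0 UN cU]] := conv_open_sub N0.
have nU : nbhs 0 U by apply: open_nbhs_nbhs.
have KUV : forall k u, K k -> U u -> ~ V (k + u).
  by move=> k u Kk Uu; apply: HN => //; apply: UN.
have VZ : forall a x, V x -> V (a *: x).
  by move=> a x Vx; have := Vsub a x 0 Vx V0; rewrite addr0.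
have VN : forall x, V x -> V (- x).
  by move=> x Vx; rewrite -scaleN1r; apply: VZ.
pose W := [set x | exists k u v, [/\ K k, U u, V v & x = k - k0 + u + v]].
have Wconv : forall x y (l : R), 0 <= l -> l <= 1 -> W x -> W y ->
    W (l%:C *: x + (1 - l)%:C *: y).
  move=> x y l l0 l1 [k1 [u1 [v1 [K1 U1 V1 ->]]]] [k2 [u2 [v2 [K2 U2 V2 ->]]]].
  exists (l%:C *: k1 + (1 - l)%:C *: k2), (l%:C *: u1 + (1 - l)%:C *: u2),
    (l%:C *: v1 + (1 - l)%:C *: v2); split.
  - exact: convex_real.
  - exact: convex_real.
  - by apply: Vsub => //; apply: VZ.
  - by apply: conv_aux; rewrite -rmorphD addrC subrK rmorph1.
have WU : forall u, U u -> W u.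
  move=> u Uu; exists k0, u, 0; split => //.
  by rewrite subrr add0r addr0.
have Wabs : forall y, exists t : R, 0 < t /\ W (t%:C *: y).
  by move=> y; have [t [t0 Ut]] := absorb nU y; exists t; split => //; apply: WU.
have y00 : - k0 != 0.
  apply/eqP => /eqP; rewrite oppr_eq0 => /eqP k00.
  by apply: (KUV k0 0 Kk0 U0); rewrite addr0 k00.
have Hc : forall t : R, W (t%:C *: (- k0)) -> t * 1 <= 1.
  move=> t Wt; rewrite mulr1; case: (lerP t 1) => // t1; exfalso.
  have t0 : 0 < t by apply: lt_trans t1.
  have l0 : 0 <= t^-1 by rewrite invr_ge0 ltW.
  have l1 : t^-1 <= 1 by rewrite invf_le1 // ltW.
  have W0 : W 0 by apply: WU.
  have := Wconv _ _ _ l0 l1 Wt W0.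
  rewrite scaler0 addr0 scalerA -rmorphM mulVf ?lt0r_neq0 // rmorph1 scale1r.
  move=> [k [u [v [Kk Uu Vv e]]]].
  have h := congr1 (fun z => z + k0) e; rewrite /= addNr zmod_aux in h.
  have : k + u = - v by apply/eqP; rewrite -addr_eq0 -h.
  by move=> e2; apply: (KUV k u Kk Uu); rewrite e2; apply: VN.
have [f [flin [fk0 fW]]] := hb_main Wconv Wabs y00 Hc.
have fV : forall v, V v -> f v = 0.
  move=> v Vv.
  have Hr : forall r : R, r * f v <= 1.
    move=> r; rewrite -(fZ flin); apply: fW.
    exists k0, 0, (r%:C *: v); split => //; first by apply: VZ.
    by rewrite subrr add0r add0r.
  case: (eqVneq (f v) 0) => // h; exfalso.
  have := Hr (2 / f v); rewrite divfK // => h2; clear -h2; lra.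
have fK : forall k, K k -> f k < 0.
  have [t [t0 Ut]] := absorb nU (- k0).
  move=> k Kk.
  have : W (k - k0 + t%:C *: (- k0) + 0) by exists k, (t%:C *: (- k0)), 0.
  move/fW; rewrite addr0 !(fD flin) (fZ flin) fk0 => h; clear -h t0; lra.
have fU : forall u, U u -> f u <= 1 by move=> u /WU /fW.
pose Z := [set h | [/\ U h, U (- h), U ('i *: h) & U (- ('i *: h))]].
have Z0 : nbhs 0 Z.
  have n1 : nbhs 0 [set h | U (- h)].
    have c1 : (-1 : R[i]) != 0 by rewrite oppr_eq0 oner_neq0.
    by apply: filterS (nbhs_pre c1 nU) => h /=; rewrite scaleN1r.
  have n2 : nbhs 0 [set h | U ('i *: h)].
    by apply: nbhs_pre nU; rewrite eq_complex /= oner_eq0 andbF.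
  have n3 : nbhs 0 [set h | U (- ('i *: h))].
    have c1 : (- 'i : R[i]) != 0.
      by rewrite oppr_eq0 eq_complex /= oner_eq0 andbF.
    by apply: filterS (nbhs_pre c1 nU) => h /=; rewrite scaleNr.
  by apply: filter_app n3; apply: filter_app n2; apply: filter_app n1; near=> h => a b c; split => //; near: h.
have bnd : forall h, Z h -> `|cphi f h| <= 2.
  move=> h [Uh Umh Uih Umih].
  have a1 := fU _ Uh; have a2 := fU _ Umh; have a3 := fU _ Uih; have a4 := fU _ Umih.
  rewrite !(fN flin) in a2 a4.
  rewrite normc_def /=.
  have -> : (2 : R[i]) = (2 : R)%:C by rewrite rmorph_nat.
  rewrite lecR -[X in _ <= X](@ger0_norm _ 2) // -sqrtr_sqr.
  apply: ler_wsqrtr; nra.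
exists (cphi f : A -> R[i]^o); split.
  split; last first.
    move=> v Vv; rewrite /cphi fV // fV ?oppr0 //.
    by apply: VZ.
  split; first by move=> a x y; exact: (cphi_lin flin).
  apply: (lin_cont (Z := Z)) => //.
  by move=> a x y; exact: (cphi_lin flin).
split.
  split; first by move=> a x y; exact: (cphi_lin flin).
  apply: (lin_cont (Z := Z)) => //.
  by move=> a x y; exact: (cphi_lin flin).
move=> _ [k Kk <-] /=; apply/eqP => /eqP; rewrite eq_complex /= => /andP [/eqP h _].
by have := fK k Kk; rewrite h ltxx.
Unshelve. all: by end_near.
Qed.
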